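(* Let $G_1$ and $G_2$ be two vertex-disjoint 2-edge-colored graphs with Hamiltonian alternating cycles $C_1=x_0x_1\cdots x_{2n-1}x_0$ and $C_2=y_0y_1\cdots y_{2m-1}y_0$, respectively, and let $G\in G_1\oplus G_2$. Suppose there is no good pair in $G$ (between $C_1$ and $C_2$), and that for each $i\in\{1,2\}$ there is a vertex of $C_i$ which is non-singular with respect to $C_{3-i}$. Let $m_1=\min\{n,m\}$ and $M_2=\max\{n,m\}$. Then for each vertex $v\in V(G)$ and each even integer $\ell\in[4,4m_1]\cup[2M_2,2n+2m]$, there is an alternating cycle of length $\ell$ in $G$ passing through $v$.
   Context: All graphs are simple, with edges colored red or blue. An alternating cycle is a cycle in which consecutive edges have different colors; a Hamiltonian alternating cycle of a graph is an alternating cycle through all its vertices. For vertex-disjoint 2-edge-colored graphs $G_1,G_2$, the colored generalized sum $G_1\oplus G_2$ is the set of 2-edge-colored graphs $G$ with $V(G)=V(G_1)\cup V(G_2)$, $G\langle V(G_i)\rangle=G_i$ with the same coloring, and exactly one edge (of arbitrary fixed color) between each $u\in V(G_1)$ and $w\in V(G_2)$; these latter edges are the exterior edges. For $v$ on an alternating cycle $C$, $v^r$ (resp. $v^b$) is the neighbor of $v$ on $C$ with $vv^r$ red (resp. $vv^b$ blue). For an exterior edge $vw$ with $v\in V(C_1)$, $w\in V(C_2)$: if $vw$ is red, $vw,v^rw^r$ is a good pair if $v^rw^r$ is red; if $vw$ is blue, $vw,v^bw^b$ is a good pair if $v^bw^b$ is blue. A vertex $v\in V(C_i)$ is singular with respect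 to $C_{3-i}$ if all edges between $v$ and $V(C_{3-i})$ have the same color, and non-singular otherwise. For integers $a\le b$, $[a,b]=\{a,a+1,\dots,b\}$. *)

(* Defs.v *)
From mathcomp Require Import all_boot.
Set Implicit Arguments. Unset Strict Implicit. Unset Printing Implicit Defensive.

Section AltCycles.
Variable T : finType.

(* A 2-edge-colored simple graph on vertex type T is given by an
   adjacency relation [adj] (symmetric, irreflexive) and a coloring
   [col] of pairs, [col u v = true] meaning the edge uv is red and
   [false] meaning blue (col is required symmetric). *)
Definition simple_2ec (adj col : rel T) : Prop :=
  [/\ forall u v, adj u v = adj v u,
      forall u, ~~ adj u u &
      forall u v, col u v = col v u].

(* An alternating cycle, given as the cyclic sequence of its vertices
   s = [:: x_0; ...; x_(k-1)] (edges x_i x_(i+1 mod k)): the vertices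
   are distinct, there are at least 3 of them, consecutive vertices are
   adjacent and consecutive edges have different colors. *)
Definition alt_cycle (adj col : rel T) (s : seq T) : bool :=
  if s is x0 :: _ then
    let k := size s in
    let nt i := nth x0 s (i %% k) in
    [&& 3 <= k, uniq s,
     all (fun i => adj (nt i) (nt i.+1)) (iota 0 k) &
     all (fun i => col (nt i) (nt i.+1) != col (nt i.+1) (nt i.+2)) (iota 0 k)]
  else false.

(* v^r and v^b on the cycle s: the neighbor (next or previous vertex on
   the cycle) joined to v by a red (resp. blue) edge. *)
Definition cnb (col : rel T) (s : seq T) (b : bool) (v : T) : T :=
  if col v (next s v) == b then next s v else prev s v.
Definition vr col s v := cnb col s true v.
Definition vb col s v := cnb col s false v.

(* For an exterior edge vw with v on C1 and w on C2, the pair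
   (vw, v^r w^r) [vw red] resp. (vw, v^b w^b) [vw blue] is good. *)
Definition good_pair (col : rel T) (C1 C2 : seq T) (v w : T) : bool :=
  if col v w then col (vr col C1 v) (vr col C2 w)
  else ~~ col (vb col C1 v) (vb col C2 w).

Definition nonsingular (col : rel T) (C : seq T) (v : T) : bool :=
  [exists w1, exists w2, [&& w1 \in C, w2 \in C & col v w1 != col v w2]].

End AltCycles.

(* Main.v *)
Require Import Defs.
From mathcomp Require Import all_boot.
Set Warnings "-notation-overridden".
From mathcomp Require Import zify.
From Stdlib Require Import Classical.
Set Implicit Arguments. Unset Strict Implicit. Unset Printing Implicit Defensive.


Section S.
Variable T : finType.
Variables adj col : rel T.

Lemma alt_mk (f : nat -> T) k b : 4 <= k -> ~~ odd k ->
  (forall s t, s < k -> t < k -> f s = f t -> s = t) ->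
  (forall t, t < k -> adj (f t) (f (t.+1 %% k)) /\ col (f t) (f (t.+1 %% k)) = b (+) odd t) ->
  alt_cycle adj col (mkseq f k).
Proof.
move=> k4 ek inj E.
have Hs : size (mkseq f k) = k by rewrite size_mkseq.
case Hm: (mkseq f k) => [|x0 s']; first by move: Hs; rewrite Hm /=; lia.
rewrite /alt_cycle -Hm Hs.
have nt : forall i, nth x0 (mkseq f k) (i %% k) = f (i %% k).
  move=> i; rewrite nth_mkseq //; apply: ltn_pmod; lia.
apply/and4P; split.
- lia.
- rewrite map_inj_in_uniq ?iota_uniq // => s t; rewrite !mem_iota => /andP[_ hs] /andP[_ ht].
  by apply: inj.
- apply/allP => i; rewrite mem_iota => /andP[_ hi]; rewrite !nt.
  rewrite (modn_small hi); by case: (E i hi).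
- apply/allP => i; rewrite mem_iota => /andP[_ hi]; rewrite !nt.
  rewrite (modn_small hi).
  have [_ e1] := E i hi.
  have -> : i.+2 %% k = (i.+1 %% k).+1 %% k by rewrite -[in RHS]addn1 modnDml addn1.
  have hi1 : i.+1 %% k < k by apply: ltn_pmod; lia.
  have [_ e2] := E _ hi1.
  rewrite e1 e2.
  case: (ltnP i.+1 k) => h.
  + rewrite modn_small // /=. by case: (b); case: (odd i).
  + have -> : i.+1 = k by lia.
    rewrite modnn /=. have : odd i.+1 = odd k by have -> : i.+1 = k by lia.
    by rewrite /= (negbTE ek); case: (b); case: (odd i).
Qed.
End S.


Section S.
Variable T : finType.
Variables adj col : rel T.

Record param (C : seq T) (N : nat) (z : nat -> T) : Prop := Param {
  zP : forall t, z (t + N) = z t;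
  zinj : forall s t, s < N -> t < N -> z s = z t -> s = t;
  zC : forall t, z t \in C;
  zsurj : forall v, v \in C -> exists t, z t = v;
  zadj : forall t, adj (z t) (z t.+1);
  zcol : forall t, col (z t) (z t.+1) = ~~ odd t;
  znb : forall t, (next C (z t) = z t.+1 /\ prev C (z t) = z (t + N.-1)) \/
               (next C (z t) = z (t + N.-1) /\ prev C (z t) = z t.+1) }.

Lemma next_nth_mod (C : seq T) x0 k : uniq C -> k < size C ->
  next C (nth x0 C k) = nth x0 C (k.+1 %% size C).
Proof.
move=> u hk; rewrite next_nth mem_nth //.
case: C u hk => [|y C'] // u hk; rewrite /= in hk.
rewrite index_uniq //=.
case: (ltnP k (size C')) => h.
- have -> : k.+1 %% (size C').+1 = k.+1 by rewrite modn_small //; lia.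
  by apply: set_nth_default.
- have -> : k = size C' by lia.
  by rewrite modnn /= nth_default.
Qed.

Lemma param_of (C : seq T) : alt_cycle adj col C ->
  (forall u v, col u v = col v u) ->
  exists z, param C (size C) z.
Proof.
case: C => [|x0 C'] //; set C := x0 :: C'.
rewrite /alt_cycle -/C; set N := size C.
move=> /and4P[h3 u /allP ha /allP hc] csym.
have NP : 0 < N by lia.
pose nt k := nth x0 C (k %% N).
have ntm : forall k, nt (k %% N) = nt k by move=> k; rewrite /nt modn_mod.
have ntS : forall k, nt (k %% N).+1 = nt k.+1.
  by move=> k; rewrite /nt -addn1 modnDml addn1.
have ntS2 : forall k, nt (k %% N).+2 = nt k.+2.
  by move=> k; rewrite /nt -addn2 modnDml addn2.
have hk : forall k, k %% N \in iota 0 N by move=> k; rewrite mem_iota /=; apply: ltn_pmod.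
have ADJ : forall k, adj (nt k) (nt k.+1).
  by move=> k; have := ha _ (hk k); rewrite -/(nt _) -/(nt _) ntm ntS.
pose cc t := col (nt t) (nt t.+1).
have ccS : forall t, cc t.+1 = ~~ cc t.
  move=> t; have := hc _ (hk t).
  rewrite -/(nt _) -/(nt _) -/(nt _) ntm ntS ntS2 /cc.
  by case: (col _ _); case: (col _ _).
have ccE : forall t, cc t = cc 0 (+) odd t.
  elim=> [|t IH]; first by rewrite addbF.
  by rewrite ccS IH /=; case: (cc 0); case: (odd t).
pose sh := if cc 0 then 0 else 1.
exists (fun t => nt (t + sh)).
have ntinj : forall a b, nt a = nt b -> a %% N = b %% N.
  move=> a b; rewrite /nt => /eqP; rewrite nth_uniq //; try by apply: ltn_pmod.
  by move/eqP.
constructor.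
- by move=> t; rewrite /nt addnAC modnDr.
- move=> s t hs ht /ntinj /eqP; rewrite eqn_modDr => /eqP.
  by rewrite !modn_small.
- by move=> t; rewrite /nt mem_nth // ltn_pmod.
- move=> v vC; exists (index v C + (N - sh)).
  rewrite /nt -addnA subnK; last by rewrite /sh; case: (cc 0); lia.
  by rewrite modnDr modn_small ?index_mem // nth_index.
- by move=> t; rewrite addSn; apply: ADJ.
- move=> t; rewrite addSn -/(cc _) ccE /sh oddD.
  by case: (cc 0) => /=; case: (odd t).
- move=> t; left.
  have nx : next C (nt (t + sh)) = nt (t + sh).+1.
    rewrite /nt next_nth_mod //; last by apply: ltn_pmod.
    by rewrite -/N -addn1 modnDml addn1.
  rewrite nx addSn; split => //.
  have e : nt (t + N.-1 + sh).+1 = nt (t + sh).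
    rewrite /nt; have -> : (t + N.-1 + sh).+1 = t + sh + N by lia.
    by rewrite modnDr.
  have nx2 : next C (nt (t + N.-1 + sh)) = nt (t + N.-1 + sh).+1.
    rewrite /nt next_nth_mod //; last by apply: ltn_pmod.
    by rewrite -/N -addn1 modnDml addn1.
  by rewrite -[in LHS]e -nx2 prev_next.
Qed.

Hypothesis adjsym : forall u v, adj u v = adj v u.
Hypothesis colsym : forall u v, col u v = col v u.

Lemma zPk C N z : param C N z -> forall t k, z (t + N * k) = z t.
Proof.
move=> P t; elim=> [|k IH]; first by rewrite muln0 addn0.
by rewrite mulnS addnCA addnC (zP P).
Qed.

Lemma zmod C N z : param C N z -> 0 < N -> forall t, z t = z (t %% N).
Proof.
move=> P NP t; rewrite {1}(divn_eq t N) addnC mulnC (zPk P) //.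
Qed.

Lemma cnb_char C v a b beta : 
  (next C v = a /\ prev C v = b) \/ (next C v = b /\ prev C v = a) ->
  col v a = beta -> col v b = ~~ beta -> cnb col C beta v = a.
Proof.
move=> H ha hb; rewrite /cnb.
case: H => [[e1 e2]|[e1 e2]]; rewrite e1 e2.
- by rewrite ha eqxx.
- by rewrite hb; case: beta {ha hb}.
Qed.

Lemma zcol' C N z : param C N z -> ~~ odd N -> 0 < N ->
  forall t, col (z t) (z (t + N.-1)) = odd t.
Proof.
move=> P eN NP t.
rewrite colsym; have e : (t + N.-1).+1 = t + N by lia.
rewrite -[X in col _ X](zP P t) -e (zcol P) oddD.
have : odd N.-1 = true.
  by move: eN; clear -NP; case: N NP => // N' _ /=; case: (odd N').
by move=> ->; case: (odd t).
Qed.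

Lemma vr_z C N z : param C N z -> ~~ odd N -> 0 < N ->
  forall t, vr col C (z t) = if odd t then z (t + N.-1) else z t.+1.
Proof.
move=> P eN NP t; rewrite /vr.
case ot: (odd t).
- apply: cnb_char; first by case: (znb P t) => [[-> ->]|[-> ->]]; [right|left].
  + by rewrite (zcol' P eN NP).
  + by rewrite (zcol P) ot.
- apply: cnb_char; first by apply: (znb P t).
  + by rewrite (zcol P) ot.
  + by rewrite (zcol' P eN NP) ot.
Qed.

Lemma vb_z C N z : param C N z -> ~~ odd N -> 0 < N ->
  forall t, vb col C (z t) = if odd t then z t.+1 else z (t + N.-1).
Proof.
move=> P eN NP t; rewrite /vb.
case ot: (odd t).
- apply: cnb_char; first by apply: (znb P t).
  + by rewrite (zcol P) ot.
  + by rewrite (zcol' P eN NP) ot.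
- apply: cnb_char; first by case: (znb P t) => [[-> ->]|[-> ->]]; [right|left].
  + by rewrite (zcol' P eN NP) ot.
  + by rewrite (zcol P) ot.
Qed.

Lemma param_refl C N z : param C N z -> ~~ odd N -> 2 <= N ->
  param C N (fun t => z (1 + N.-1 * t)).
Proof.
move=> P eN N2.
have NP : 0 < N by lia.
case: N P eN N2 NP => [|[|N']] // P eN _ _ /=.
have Pk := zPk P.
constructor.
- move=> t; have -> : 1 + N'.+1 * (t + N'.+2) = 1 + N'.+1 * t + N'.+2 * N'.+1 by nia.
  by rewrite Pk.
- move=> s t hs ht; rewrite (zmod P) // [z (1 + _ * t)](zmod P) //.
  move/(zinj P); rewrite !ltn_pmod // => /(_ isT isT) /eqP e.
  have : (1 + N'.+1 * s + (s + t)) == (1 + N'.+1 * t + (s + t)) %[mod N'.+2].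
    by rewrite -modnDml (eqP e) modnDml.
  have -> : 1 + N'.+1 * s + (s + t) = N'.+2 * s + (1 + t) by nia.
  have -> : 1 + N'.+1 * t + (s + t) = N'.+2 * t + (1 + s) by nia.
  rewrite [N'.+2 * s]mulnC [N'.+2 * t]mulnC !modnMDl !(addnC 1) eqn_modDr.
  by rewrite !modn_small // => /eqP.
- by move=> t; apply: (zC P).
- move=> v /(zsurj P) [t <-]; exists (N'.+1 * t + 1).
  have -> : 1 + N'.+1 * (N'.+1 * t + 1) = t + N'.+2 * (1 + N' * t) by nia.
  by rewrite Pk.
- move=> t; rewrite adjsym.
  have -> : 1 + N'.+1 * t.+1 = N'.+1 * t + N'.+2 by nia.
  rewrite (zP P) add1n; exact: (zadj P).
- move=> t; rewrite colsym.
  have -> : 1 + N'.+1 * t.+1 = N'.+1 * t + N'.+2 by nia.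
  rewrite (zP P) add1n (zcol P) oddM /=.
  move: eN => /=; case: (odd N') => //= _; by rewrite andTb.
- move=> t.
  have e1 : z (1 + N'.+1 * t.+1) = z (N'.+1 * t).
    have -> : 1 + N'.+1 * t.+1 = N'.+1 * t + N'.+2 by nia.
    by rewrite (zP P).
  have e2 : z (1 + N'.+1 * (t + N'.+1)) = z (N'.+1 * t).+2.
    have -> : 1 + N'.+1 * (t + N'.+1) = (N'.+1 * t).+2 + N'.+2 * N' by nia.
    by rewrite Pk.
  rewrite /= in e1 e2 *; rewrite e1 e2 add1n.
  have e3 : z ((N'.+1 * t).+1 + N'.+1) = z (N'.+1 * t).
    have -> : (N'.+1 * t).+1 + N'.+1 = N'.+1 * t + N'.+2 by nia.
    by rewrite (zP P).
  by case: (znb P (N'.+1 * t).+1) => [[-> ->]|[-> ->]]; rewrite e3; [right|left].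
Qed.

End S.


Lemma oddE2 m : odd m = (m %% 2 == 1). Proof. by rewrite modn2; case: (odd m). Qed.

Section Main.
Variable T : finType.
Variables adj col : rel T.
Hypothesis adjsym : forall u v, adj u v = adj v u.
Hypothesis colsym : forall u v, col u v = col v u.
Variables (x y : nat -> T) (n m : nat).
Hypothesis hxP : forall t, x (t + n.*2) = x t.
Hypothesis hyP : forall t, y (t + m.*2) = y t.
Hypothesis hxinj : forall s t, s < n.*2 -> t < n.*2 -> x s = x t -> s = t.
Hypothesis hyinj : forall s t, s < m.*2 -> t < m.*2 -> y s = y t -> s = t.
Hypothesis hxadj : forall t, adj (x t) (x t.+1).
Hypothesis hyadj : forall t, adj (y t) (y t.+1).
Hypothesis hxcol : forall t, col (x t) (x t.+1) = ~~ odd t.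
Hypothesis hycol : forall t, col (y t) (y t.+1) = ~~ odd t.
Hypothesis hxy : forall s t, adj (x s) (y t).
Hypothesis hne : forall s t, x s <> y t.

Definition D i j := col (x i) (y j) (+) odd i.

Lemma colD i j b : D i j = b -> col (x i) (y j) = b (+) odd i.
Proof. by rewrite /D => <-; case: (col _ _); case: (odd i). Qed.

Lemma xmod t : x t = x (t %% n.*2).
Proof.
rewrite {1}(divn_eq t n.*2); elim: (t %/ n.*2) => [|k IH]; first by rewrite mul0n add0n.
by rewrite mulSn -addnA addnC hxP.
Qed.

Lemma ymod t : y t = y (t %% m.*2).
Proof.
rewrite {1}(divn_eq t m.*2); elim: (t %/ m.*2) => [|k IH]; first by rewrite mul0n add0n.
by rewrite mulSn -addnA addnC hyP.
Qed.

Lemma xinj_mod a b : 0 < n -> x a = x b -> a %% n.*2 = b %% n.*2.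
Proof.
move=> n0; rewrite (xmod a) (xmod b) => /hxinj; apply; apply: ltn_pmod; lia.
Qed.

Lemma yinj_mod a b : 0 < m -> y a = y b -> a %% m.*2 = b %% m.*2.
Proof.
move=> m0; rewrite (ymod a) (ymod b) => /hyinj; apply; apply: ltn_pmod; lia.
Qed.

Ltac ifs := repeat match goal with
  | |- context [if ?b then _ else _] =>
      first [ have -> : b = true by lia | have -> : b = false by lia ]
  end.

Definition tp_f i j p q t := if t <= p then x (i + t) else y (j + q - (t - p.+1)).

Lemma tp_cycle i j p q : 0 < n -> 0 < m -> odd i = odd j -> odd p = odd q ->
  D i j = false -> D (i + p) (j + q) = true -> p < n.*2 -> q < m.*2 -> 2 <= p + q ->
  alt_cycle adj col (mkseq (tp_f i j p q) (p + q + 2)).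
Proof.
move=> n0 m0 pij ppq Dij Dpq pn qm pq2.
have hij : i %% 2 = j %% 2 by rewrite !modn2 pij.
have hpq : p %% 2 = q %% 2 by rewrite !modn2 ppq.
apply: (alt_mk (b := ~~ odd i)).
- lia.
- rewrite !oddE2; lia.
- move=> s t hs ht; rewrite /tp_f.
  case: (leqP s p) => hsp; case: (leqP t p) => htp.
  + move/xinj_mod => /(_ n0) /eqP; rewrite eqn_modDl => /eqP.
    rewrite !modn_small; lia.
  + by move=> e; case: (hne e).
  + by move=> e; case: (hne (esym e)).
  + move/yinj_mod => /(_ m0).
    have -> : j + q - (s - p.+1) = j + (q - (s - p.+1)) by lia.
    have -> : j + q - (t - p.+1) = j + (q - (t - p.+1)) by lia.
    move/eqP; rewrite eqn_modDl => /eqP.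
    rewrite !modn_small; lia.
- move=> t ht.
  case: (ltnP t p) => htp.
  + have -> : t.+1 %% (p + q + 2) = t.+1 by rewrite modn_small; lia.
    rewrite /tp_f; ifs; rewrite addnS; split; first by apply: hxadj.
    rewrite hxcol !oddE2; lia.
  case: (eqVneq t p) => [->|htp2].
  + have -> : p.+1 %% (p + q + 2) = p.+1 by rewrite modn_small; lia.
    rewrite /tp_f; ifs; rewrite subnn subn0; split; first by apply: hxy.
    rewrite (colD Dpq) !oddE2; lia.
  case: (ltnP t (p + q).+1) => htq.
  + have -> : t.+1 %% (p + q + 2) = t.+1 by rewrite modn_small; lia.
    rewrite /tp_f; ifs.
    have -> : j + q - (t - p.+1) = (j + q - (t.+1 - p.+1)).+1 by lia.
    rewrite adjsym colsym; split; first by apply: hyadj.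
    rewrite hycol !oddE2; lia.
  + have -> : t = p + q + 1 by lia.
    have -> : (p + q + 1).+1 = p + q + 2 by lia.
    rewrite modnn.
    rewrite /tp_f; ifs.
    have -> : j + q - (p + q + 1 - p.+1) = j by lia.
    rewrite addn0 adjsym colsym (colD Dij); split; first by apply: hxy.
    rewrite !oddE2; lia.
Qed.


Lemma Lx i a b : 0 < n -> x (i + a) = x (i + b) -> a %% n.*2 = b %% n.*2.
Proof. by move=> n0 /(xinj_mod n0) /eqP; rewrite eqn_modDl => /eqP. Qed.
Lemma Ly i a b : 0 < m -> y (i + a) = y (i + b) -> a %% m.*2 = b %% m.*2.
Proof. by move=> m0 /(yinj_mod m0) /eqP; rewrite eqn_modDl => /eqP. Qed.

Definition ham_f i j q t :=
  if t <= 1 then x (i + t)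
  else if t <= q.+2 then y (j + (q - (t - 2)))
  else if t <= q + n.*2 then x (i + (t - q - 1))
  else y (j + (m.*2 - 1 - (t - q - n.*2 - 1))).

Ltac oddsimp := rewrite ?oddS ?oddD ?odd_double ?addbF ?addFb.
Ltac par pij oq i j q := repeat (oddsimp; rewrite oddB; last by lia); oddsimp;
  move: pij oq; case: (odd i); case: (odd j); case: (odd q) => //=; try (case: (odd _) => //=).

Lemma ham_cycle i j q : 2 <= n -> 2 <= m -> odd i = odd j -> odd q ->
  q + 3 <= m.*2 ->
  D i j = true -> D (i + 2) j = false -> D (i + 1) (j + q) = true ->
  D i (j + q + 1) = false -> D (i + n.*2 - 1) (j + m.*2 - 1) = true ->
  alt_cycle adj col (mkseq (ham_f i j q) (n.*2 + m.*2)).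
Proof.
move=> n2 m2 pij oq qm D1 D2 D3 D4 D5.
have n0 : 0 < n by lia.
have m0 : 0 < m by lia.
apply: (alt_mk (b := ~~ odd i)).
- lia.
- par pij oq i j q.
- move=> s t hs ht; rewrite /ham_f.
  by repeat case: ifP => ?; move=> e; first [ exfalso; apply: (hne e)
     | exfalso; apply: (hne (esym e))
     | have := Lx n0 e; rewrite !modn_small; lia
     | have := Ly m0 e; rewrite !modn_small; lia ].
- move=> t ht.
  have Sk : t.+1 < n.*2 + m.*2 -> t.+1 %% (n.*2 + m.*2) = t.+1.
    by move=> h; rewrite modn_small.
  case: (ltnP t 1) => h1.
  + rewrite Sk; last lia.
    have -> : t = 0 by lia.
    rewrite /ham_f; ifs.
    rewrite addn0 addn1; split; first by apply: hxadj.
    rewrite hxcol; par pij oq i j q.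
  case: (ltnP t 2) => h2.
  + rewrite Sk; last lia.
    have -> : t = 1 by lia.
    rewrite /ham_f; ifs.
    rewrite subnn subn0; split; first by apply: hxy.
    rewrite (colD D3); par pij oq i j q.
  case: (ltnP t q.+2) => h3.
  + rewrite Sk; last lia. rewrite /ham_f; ifs.
    have -> : j + (q - (t - 2)) = (j + (q - (t.+1 - 2))).+1 by lia.
    rewrite adjsym colsym; split; first by apply: hyadj.
    rewrite hycol; par pij oq i j q.
  case: (ltnP t q.+3) => h4.
  + rewrite Sk; last lia.
    have -> : t = q.+2 by lia.
    rewrite /ham_f; ifs.
    have -> : j + (q - (q.+2 - 2)) = j by lia.
    have -> : i + (q.+3 - q - 1) = i + 2 by lia.
    rewrite adjsym colsym; split; first by apply: hxy.
    rewrite (colD D2); par pij oq i j q.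
  case: (ltnP t (q + n.*2)) => h5.
  + rewrite Sk; last lia. rewrite /ham_f; ifs.
    have -> : i + (t.+1 - q - 1) = (i + (t - q - 1)).+1 by lia.
    split; first by apply: hxadj.
    rewrite hxcol; par pij oq i j q.
  case: (ltnP t (q + n.*2).+1) => h6.
  + rewrite Sk; last lia.
    have -> : t = q + n.*2 by lia.
    rewrite /ham_f; ifs.
    have -> : i + (q + n.*2 - q - 1) = i + n.*2 - 1 by lia.
    have -> : j + (m.*2 - 1 - ((q + n.*2).+1 - q - n.*2 - 1)) = j + m.*2 - 1 by lia.
    split; first by apply: hxy.
    rewrite (colD D5); par pij oq i j q.
  case: (ltnP t (n.*2 + m.*2).-1) => h7.
  + rewrite Sk; last lia. rewrite /ham_f; ifs.
    have -> : j + (m.*2 - 1 - (t - q - n.*2 - 1)) = (j + (m.*2 - 1 - (t.+1 - q - n.*2 - 1))).+1 by clear -h6 h7 m2; lia.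
    rewrite adjsym colsym; split; first by apply: hyadj.
    rewrite hycol; par pij oq i j q.
  + have e : t.+1 = n.*2 + m.*2 by lia.
    have ot : odd t by move: (congr1 odd e); rewrite oddD !odd_double /=; case: (odd t).
    rewrite e modnn /ham_f; ifs.
    have -> : j + (m.*2 - 1 - (t - q - n.*2 - 1)) = j + q + 1 by lia.
    rewrite addn0 adjsym colsym; split; first by apply: hxy.
    rewrite (colD D4) ot; par pij oq i j q.
Qed.

Lemma mem_mk (f : nat -> T) k t : t < k -> f t \in mkseq f k.
Proof. by move=> h; rewrite /mkseq; apply: map_f; rewrite mem_iota. Qed.

Lemma uniq_all (s : seq T) v : uniq s -> size s = #|T| -> v \in s.
Proof.
move=> u e; apply/negPn/negP => vs.
have : #|v :: s| <= #|T| by apply: max_card.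
have /card_uniqP -> : uniq (v :: s) by rewrite /= vs.
by rewrite /= e ltnn.
Qed.

Hypothesis hD : forall i j, odd i = odd j -> D i.+1 j.+1 = D i j.

Lemma DK i j t : odd i = odd j -> D (i + t) (j + t) = D i j.
Proof.
move=> h; elim: t => [|t IH]; first by rewrite !addn0.
by rewrite !addnS hD // !oddD h.
Qed.

Lemma Dx i j : D (i + n.*2) j = D i j.
Proof. by rewrite /D hxP oddD odd_double addbF. Qed.

Lemma Dy i j : D i (j + m.*2) = D i j.
Proof. by rewrite /D hyP. Qed.

Lemma Dxm i j : odd i = odd j -> D (i + m.*2) j = D i j.
Proof. by move=> h; rewrite -(Dy (i + m.*2)) DK. Qed.

Lemma Dyk i j k : D i (j + m.*2 * k) = D i j.
Proof.
elim: k => [|k IH]; first by rewrite muln0 addn0.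
by rewrite mulnS addnCA addnC Dy.
Qed.

Definition E t := D t 0.

Lemma Ec t0 j : ~~ odd t0 -> D (t0 + j) j = E t0.
Proof. by move=> h; rewrite -{2}(add0n j) DK //; rewrite (negbTE h). Qed.

Lemma Em t : ~~ odd t -> E (t + m.*2) = E t.
Proof. by move=> h; rewrite /E Dxm // (negbTE h). Qed.

Lemma Emk t k : ~~ odd t -> E (t + m.*2 * k) = E t.
Proof.
move=> h; elim: k => [|k IH]; first by rewrite muln0 addn0.
rewrite mulnS addnCA addnC Em; first exact IH.
by rewrite oddD -muln2 mulnAC oddM /= andbF addbF.
Qed.

Lemma En t : E (t + n.*2) = E t.
Proof. by rewrite /E Dx. Qed.

Lemma step (f : nat -> bool) K : f 0 = true -> f K = false ->
  exists r, [/\ r < K, f r = true & f r.+1 = false].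
Proof.
elim: K => [|K IH] h0 hK; first by rewrite h0 in hK.
case e: (f K).
- by exists K; split.
- have [r [r1 r2 r3]] := IH h0 e; exists r; split => //; lia.
Qed.

Lemma stepN (f : nat -> bool) K : f 0 = false -> f K = true ->
  exists r, [/\ r < K, f r = false & f r.+1 = true].
Proof.
move=> h0 hK; have := @step (fun r => ~~ f r) K; rewrite /= h0 hK.
move=> /(_ erefl erefl) [r [r1 r2 r3]].
by exists r; split; [done | apply/negbTE | apply/negbFE].
Qed.

Hypothesis hnc : exists i1 j1 i2 j2, [/\ odd i1 = odd j1, odd i2 = odd j2,
  D i1 j1 = true & D i2 j2 = false].
Hypothesis n2 : 2 <= n.
Hypothesis m2 : 2 <= m.
Hypothesis mn : m <= n.
Hypothesis htot : forall v, (exists t, v = x t) \/ (exists t, v = y t).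
Hypothesis hcard : #|T| = n.*2 + m.*2.

Lemma DE i j : odd i = odd j -> D i j = E (i + m.*2.-1 * j).
Proof.
move=> h; rewrite -(@DK i j (m.*2.-1 * j) h).
have -> : j + m.*2.-1 * j = 0 + m.*2 * j by rewrite add0n -{1}(mul1n j) -mulnDl; congr (_ * _); lia.
by rewrite Dyk.
Qed.

Lemma half_ex t : ~~ odd t -> exists a, t = a.*2.
Proof. by move=> h; exists t./2; rewrite -[in LHS](odd_double_half t) (negbTE h). Qed.

Lemma descent : exists d, [/\ ~~ odd d, E d = true & E (d + 2) = false].
Proof.
have [i1 [j1 [i2 [j2 [p1 p2 d1 d2]]]]] := hnc.
set t1 := i1 + m.*2.-1 * j1; set t2 := i2 + m.*2.-1 * j2.
have e1 : ~~ odd t1.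
  rewrite /t1 oddD oddM p1; have -> : odd m.*2.-1 by case: m m2 => // m' _; rewrite doubleS /= odd_double.
  by case: (odd j1).
have e2 : ~~ odd t2.
  rewrite /t2 oddD oddM p2; have -> : odd m.*2.-1 by case: m m2 => // m' _; rewrite doubleS /= odd_double.
  by case: (odd j2).
rewrite (DE p1) -/t1 in d1; rewrite (DE p2) -/t2 in d2.
have [a ha] := half_ex e1; have [b hb] := half_ex e2.
have h0 : E (t1 + 0.*2) = true by rewrite addn0.
have hK : E (t1 + (b + m.*2.-1 * a).*2) = false.
  have -> : t1 + (b + m.*2.-1 * a).*2 = t2 + m.*2 * t1.
    rewrite ha hb -!muln2; have : 0 < m.*2 by lia.
    case: (m.*2) => // M _ /=; nia.
  by rewrite Emk.
have [r [r1 r2 r3]] := @step (fun r => E (t1 + r.*2)) _ h0 hK.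
exists (t1 + r.*2); split => //.
- by rewrite oddD odd_double addbF.
- by rewrite -r3 doubleS addn2 addnS addnS.
Qed.

Lemma ascent d : ~~ odd d -> E d = true -> E (d + 2) = false ->
  exists r, [/\ r < m.-1, E (d + 2 + r.*2) = false & E (d + 4 + r.*2) = true].
Proof.
move=> ed h1 h2.
have h0 : E (d + 2 + 0.*2) = false by rewrite addn0.
have hK : E (d + 2 + (m.-1).*2) = true.
  have -> : d + 2 + (m.-1).*2 = d + m.*2 by lia.
  by rewrite Em.
have [r [r1 r2 r3]] := @stepN (fun r => E (d + 2 + r.*2)) _ h0 hK.
exists r; split => //; rewrite -r3; congr E; lia.
Qed.

Lemma alt_uniq (s : seq T) : alt_cycle adj col s -> uniq s.
Proof. by case: s => // x0 s' /and4P[]. Qed.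

Lemma xPk t k : x (t + n.*2 * k) = x t.
Proof. by rewrite xmod [in RHS]xmod addnC mulnC modnMDl. Qed.

Lemma main_l v l : ~~ odd l -> (4 <= l <= 4 * m) || (2 * n <= l <= 2 * n + 2 * m) ->
  exists2 s, alt_cycle adj col s & (size s = l) /\ (v \in s).
Proof.
move=> el hl.
have l4 : 4 <= l by case/orP: hl => /andP[]; lia.
have hlu : l <= 2 * n + 2 * m by case/orP: hl => /andP[]; lia.
have hl3 : l <= 4 * m \/ 2 * n <= l by case/orP: hl => /andP[]; lia.
clear hl.
have n0 : 0 < n by lia.
have m0 : 0 < m by lia.
have [d [ed d1 d2]] := descent.
have [r [r1 r2 r3]] := ascent ed d1 d2.
case: (eqVneq l (n.*2 + m.*2)) => [->|/eqP hl2].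
- set q := m.*2 - 3 - r.*2.
  have oq : odd q.
    have : q + 3 + r.*2 = m.*2 by rewrite /q; lia.
    move/(congr1 odd); rewrite !oddD !odd_double /=.
    by case: (odd q); case: (odd r.*2).
  have H : alt_cycle adj col (mkseq (ham_f d 0 q) (n.*2 + m.*2)).
    apply: ham_cycle => //.
    + by rewrite (negbTE ed).
    + rewrite /q; lia.
    + rewrite add0n -Dxm; last by rewrite oddD (negbTE ed) oq.
      have -> : d + 1 + m.*2 = (d + 4 + r.*2) + q by rewrite /q; lia.
      rewrite Ec //; by rewrite !oddD odd_double (negbTE ed).
    + rewrite -Dxm; last by rewrite add0n addn1 /= oq (negbTE ed).
      have -> : d + m.*2 = (d + 2 + r.*2) + (0 + q + 1) by rewrite /q; lia.
      rewrite Ec //; by rewrite !oddD odd_double (negbTE ed).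
    + have e1 : odd (d + n.*2 - 1) = odd (0 + m.*2 - 1).
        have -> : d + n.*2 - 1 = (d + n.*2).-1 by lia.
        have -> : 0 + m.*2 - 1 = (m.*2).-1 by lia.
        have : odd (d + n.*2).-1.+1 = odd (m.*2).-1.+1.
          by rewrite !prednK ?oddD ?odd_double ?(negbTE ed) //; lia.
        by rewrite /=; case: (odd _); case: (odd _).
      rewrite -(hD e1).
      have -> : (d + n.*2 - 1).+1 = d + n.*2 by lia.
      have -> : (0 + m.*2 - 1).+1 = 0 + m.*2 by lia.
      by rewrite Dx Dy.
  exists (mkseq (ham_f d 0 q) (n.*2 + m.*2)) => //.
  split; first by rewrite size_mkseq.
  by apply: uniq_all; [apply: alt_uniq | rewrite size_mkseq hcard].
- have [h eh] := half_ex el; rewrite -muln2 in eh.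
  set a := d + 2 + r.*2.
  have ea : ~~ odd a by rewrite !oddD odd_double (negbTE ed).
  have [p [q [dl [[P1 P2 P3 P4 P5] [P6 P7]]]]] : exists p q dl,
    [/\ p = q + dl, p < n.*2, q < m.*2, 2 <= p + q & p + q + 2 = l] /\ (E (a + dl) = true /\ ~~ odd dl).
  + case: (leqP l (4 * m)) => hl4.
    * exists h, (h - 2), 2; split; first by split; lia.
      by rewrite /a -r3; split => //; congr E; lia.
    * exists (h + n - m), (h + m - 2 - n), (2 + (n - m) * 2); split; first by split; lia.
      split; last by rewrite oddD oddM /= andbF.
      rewrite -Em; last by rewrite !oddD oddM odd_double (negbTE ed) /= andbF.
      have -> : a + (2 + (n - m) * 2) + m.*2 = (a + 2) + n.*2 by rewrite -!muln2; lia.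
      rewrite En /a -r3; congr E; lia.
  have ppq : odd p = odd q by rewrite P1 oddD (negbTE P7) addbF.
  have TP : forall j, alt_cycle adj col (mkseq (tp_f (a + j) j p q) (p + q + 2)).
    move=> j; apply: tp_cycle => //.
    * by rewrite oddD (negbTE ea).
    * by rewrite Ec.
    * have -> : a + j + p = (a + dl) + (j + q) by lia.
      by rewrite Ec // oddD (negbTE ea) (negbTE P7).
  case: (htot v) => [[k ->]|[k ->]].
  + exists (mkseq (tp_f (a + (k + n.*2.-1 * a)) (k + n.*2.-1 * a) p q) (p + q + 2)) => //.
    split; first by rewrite size_mkseq.
    have e : x k = tp_f (a + (k + n.*2.-1 * a)) (k + n.*2.-1 * a) p q 0.
      rewrite /tp_f /= addn0 -(xPk k a).
      congr x; have : 0 < n.*2 by lia.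
      case: (n.*2) => // N _ /=; nia.
    by rewrite e; apply: mem_mk; lia.
  + exists (mkseq (tp_f (a + k) k p q) (p + q + 2)) => //.
    split; first by rewrite size_mkseq.
    have e : y k = tp_f (a + k) k p q (p + q + 1).
      rewrite /tp_f; have -> : (p + q + 1 <= p) = false by lia.
      congr y; lia.
    by rewrite e; apply: mem_mk; lia.
Qed.

End Main.

Lemma main_pack (T : finType) (adj col : rel T)
  (adjsym : forall u v, adj u v = adj v u) (colsym : forall u v, col u v = col v u)
  (x y : nat -> T) (n m : nat)
  (hxP : forall t, x (t + n.*2) = x t) (hyP : forall t, y (t + m.*2) = y t)
  (hxinj : forall s t, s < n.*2 -> t < n.*2 -> x s = x t -> s = t)
  (hyinj : forall s t, s < m.*2 -> t < m.*2 -> y s = y t -> s = t)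
  (hxadj : forall t, adj (x t) (x t.+1)) (hyadj : forall t, adj (y t) (y t.+1))
  (hxcol : forall t, col (x t) (x t.+1) = ~~ odd t)
  (hycol : forall t, col (y t) (y t.+1) = ~~ odd t)
  (hxy : forall s t, adj (x s) (y t)) (hne : forall s t, x s <> y t)
  (hD : forall i j, odd i = odd j ->
     col (x i.+1) (y j.+1) (+) odd i.+1 = col (x i) (y j) (+) odd i)
  (hnc : exists i1 j1 i2 j2, [/\ odd i1 = odd j1, odd i2 = odd j2,
     col (x i1) (y j1) (+) odd i1 = true & col (x i2) (y j2) (+) odd i2 = false])
  (n2 : 2 <= n) (m2 : 2 <= m) (mn : m <= n)
  (htot : forall v, (exists t, v = x t) \/ (exists t, v = y t))
  (hcard : #|T| = n.*2 + m.*2) v l :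
  ~~ odd l -> (4 <= l <= 4 * m) || (2 * n <= l <= 2 * n + 2 * m) ->
  exists2 s, alt_cycle adj col s & (size s = l) /\ (v \in s).
Proof. exact: (@main_l T adj col adjsym colsym x y n m hxP hyP hxinj hyinj hxadj hyadj hxcol hycol hxy hne hD hnc n2 m2 mn htot hcard v l). Qed.



Section Final.
Variable T : finType.
Variables adj col : rel T.
Hypothesis adjsym : forall u v, adj u v = adj v u.
Hypothesis colsym : forall u v, col u v = col v u.

Lemma alt_size (s : seq T) : alt_cycle adj col s -> 3 <= size s.
Proof. by case: s => // x0 s' /and4P[]. Qed.

Lemma flipD C1 C2 N M x y : param adj col C1 N x -> param adj col C2 M y ->
  ~~ odd N -> ~~ odd M -> 0 < N -> 0 < M ->
  (forall i j, ~~ good_pair col C1 C2 (x i) (y j)) ->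
  forall i j, odd i = odd j ->
    col (x i.+1) (y j.+1) (+) odd i.+1 = col (x i) (y j) (+) odd i.
Proof.
move=> Px Py eN eM N0 M0 NG.
pose Dd i j := col (x i) (y j) (+) odd i.
have mono : forall i j, odd i = odd j -> Dd i j -> Dd i.+1 j.+1.
  move=> i j pij; have := NG i j.
  rewrite /good_pair (vr_z colsym Px) // (vr_z colsym Py) // (vb_z colsym Px) //.
  rewrite (vb_z colsym Py) // /Dd /= -pij.
  case: (odd i) => /=.
  - case: (col (x i) (y j)) => //=; by case: (col (x i.+1) (y j.+1)).
  - case: (col (x i) (y j)) => //=; by case: (col (x i.+1) (y j.+1)).
have monoK : forall t i j, odd i = odd j -> Dd i j -> Dd (i + t) (j + t).
  elim=> [|t IH] i j pij h; first by rewrite !addn0.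
  rewrite !addnS; apply: mono; first by rewrite !oddD pij.
  exact: IH.
have per : forall i j, Dd (i + N * M) (j + N * M) = Dd i j.
  move=> i j; rewrite /Dd (zPk Px) [N * M]mulnC (zPk Py) oddD oddM.
  by rewrite (negbTE eM) ?andbF ?andFb addbF.
move=> i j pij; apply/idP/idP => h.
- have := monoK (N * M).-1 i.+1 j.+1; rewrite /= pij => /(_ erefl h).
  have e : forall k, k.+1 + (N * M).-1 = k + N * M.
    by move=> k; rewrite addSn -addnS prednK // muln_gt0 N0 M0.
  by rewrite !e per /Dd pij.
- exact: (mono i j pij h).
Qed.

Lemma finish (x y : nat -> T) (n m : nat)
  (hxP : forall t, x (t + n.*2) = x t) (hyP : forall t, y (t + m.*2) = y t)
  (hxinj : forall s t, s < n.*2 -> t < n.*2 -> x s = x t -> s = t)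
  (hyinj : forall s t, s < m.*2 -> t < m.*2 -> y s = y t -> s = t)
  (hxadj : forall t, adj (x t) (x t.+1)) (hyadj : forall t, adj (y t) (y t.+1))
  (hxcol : forall t, col (x t) (x t.+1) = ~~ odd t)
  (hycol : forall t, col (y t) (y t.+1) = ~~ odd t)
  (hxy : forall s t, adj (x s) (y t)) (hne : forall s t, x s <> y t)
  (hD : forall i j, odd i = odd j ->
     col (x i.+1) (y j.+1) (+) odd i.+1 = col (x i) (y j) (+) odd i)
  (hnc : exists i1 j1 i2 j2, [/\ odd i1 = odd j1, odd i2 = odd j2,
     col (x i1) (y j1) (+) odd i1 = true & col (x i2) (y j2) (+) odd i2 = false])
  (n2 : 2 <= n) (m2 : 2 <= m)
  (htot : forall v, (exists t, v = x t) \/ (exists t, v = y t))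
  (hcard : #|T| = n.*2 + m.*2) v l :
  ~~ odd l -> (4 <= l <= 4 * minn n m) || (2 * maxn n m <= l <= 2 * n + 2 * m) ->
  exists2 s, alt_cycle adj col s & (size s = l) /\ (v \in s).
Proof.
move=> el hl; case: (leqP m n) => mn.
- rewrite (minn_idPr mn) (maxn_idPl mn) in hl.
  exact: (@main_pack T adj col adjsym colsym x y n m hxP hyP hxinj hyinj hxadj hyadj
    hxcol hycol hxy hne hD hnc n2 m2 mn htot hcard v l el hl).
- have nm : n <= m by lia.
  rewrite (minn_idPl nm) (maxn_idPr nm) [2 * n + _]addnC in hl.
  have hyx : forall s t, adj (y s) (x t) by move=> s t; rewrite adjsym.
  have hne' : forall s t, y s <> x t by move=> s t e; apply: (hne t s); rewrite e.
  have hD' : forall i j, odd i = odd j ->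
     col (y i.+1) (x j.+1) (+) odd i.+1 = col (y i) (x j) (+) odd i.
    move=> i j p; rewrite colsym [col (y i) _]colsym.
    by have := hD j i (esym p); rewrite /= p => ->.
  have hnc' : exists i1 j1 i2 j2, [/\ odd i1 = odd j1, odd i2 = odd j2,
     col (y i1) (x j1) (+) odd i1 = true & col (y i2) (x j2) (+) odd i2 = false].
    have [i1 [j1 [i2 [j2 [p1 p2 d1 d2]]]]] := hnc.
    exists j1, i1, j2, i2; split; [by rewrite p1 | by rewrite p2 | |].
    + by rewrite colsym -p1.
    + by rewrite colsym -p2.
  have htot' : forall v, (exists t, v = y t) \/ (exists t, v = x t).
    by move=> w; case: (htot w); [right|left].
  have hcard' : #|T| = m.*2 + n.*2 by rewrite addnC.
  exact: (@main_pack T adj col adjsym colsym y x m n hyP hxP hyinj hxinj hyadj hxadj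
    hycol hxcol hyx hne' hD' hnc' m2 n2 nm htot' hcard' v l el hl).
Qed.

Definition ncP (x y : nat -> T) := exists i1 j1 i2 j2, [/\ odd i1 = odd j1, odd i2 = odd j2,
     col (x i1) (y j1) (+) odd i1 = true & col (x i2) (y j2) (+) odd i2 = false].

Lemma nc_const (x y : nat -> T) : ~ ncP x y ->
  forall i j, odd i = odd j -> col (x i) (y j) (+) odd i = col (x 0) (y 0).
Proof.
move=> h i j p.
case e1: (col (x i) (y j) (+) odd i); case e0: (col (x 0) (y 0)) => //; exfalso; apply: h.
- by exists i, j, 0, 0; split; rewrite ?addbF.
- by exists 0, 0, i, j; split; rewrite ?addbF.
Qed.

Lemma nc_or C1 C2 x y n m : param adj col C1 n.*2 x -> param adj col C2 m.*2 y ->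
  0 < m ->
  (exists2 v, v \in C1 & nonsingular col C2 v) ->
  (exists2 w, w \in C2 & nonsingular col C1 w) ->
  ncP x y \/ ncP x (fun t => y (1 + (m.*2).-1 * t)).
Proof.
move=> Px Py m0 [v vC ns1] [w wC ns2].
case: (classic (ncP x y)) => h1; first by left.
case: (classic (ncP x (fun t => y (1 + (m.*2).-1 * t)))) => h2; first by right.
exfalso.
have c1 := nc_const h1; have c2 := nc_const h2.
set dl := col (x 0) (y 0) in c1; set al := col (x 0) (y (1 + (m.*2).-1 * 0)) in c2.
have key : forall i j, col (x i) (y j) = (if odd i == odd j then dl else al) (+) odd i.
  move=> i j; case: eqP => p.
  - by rewrite -(c1 i j p); case: (col _ _); case: (odd i).
  - have e : y (1 + (m.*2).-1 * ((m.*2).-1 * j + 1)) = y j.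
      rewrite -[in RHS](zPk Py j (1 + ((m.*2).-1).-1 * j)).
      congr y; have : 1 < m.*2 by lia.
      case: (m.*2) => [|[|K]] //= _; nia.
    have p' : odd i = odd ((m.*2).-1 * j + 1).
      have : odd (m.*2).-1 by case: (m) m0 => // m' _; rewrite doubleS /= odd_double.
      rewrite oddD oddM => ->; move: p; case: (odd i); case: (odd j) => //.
    have := c2 i _ p'; rewrite /= e => <-.
    by case: (col _ _); case: (odd i).
have [i ei] := zsurj Px vC; subst v.
have [j ej] := zsurj Py wC; subst w.
move: ns1 => /existsP [w1 /existsP [w2 /and3P [w1C w2C]]].
have [j1 ej1] := zsurj Py w1C; have [j2 ej2] := zsurj Py w2C; subst w1 w2.
rewrite !key => n1.
move: ns2 => /existsP [v1 /existsP [v2 /and3P [v1C v2C]]].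
have [i1 ei1] := zsurj Px v1C; have [i2 ei2] := zsurj Px v2C; subst v1 v2.
rewrite ![col (y j) _]colsym !key => n2.
clear key c1 c2; move: n1 n2; case: (odd i); case: (odd j1); case: (odd j2); case: (odd j);
  case: (odd i1); case: (odd i2); case: dl; case: al => //.
Qed.

End Final.

Theorem proposition3p11 (T : finType) (adj col : rel T) (V1 V2 : {set T})
    (n m : nat) (C1 C2 : seq T) :
  simple_2ec adj col ->
  [disjoint V1 & V2] -> V1 :|: V2 = setT ->
  (forall u w, u \in V1 -> w \in V2 -> adj u w) ->
  alt_cycle adj col C1 -> [set x in C1] = V1 -> size C1 = n.*2 ->
  alt_cycle adj col C2 -> [set x in C2] = V2 -> size C2 = m.*2 ->
  (forall v w, v \in V1 -> w \in V2 -> ~~ good_pair col C1 C2 v w) ->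
  (exists2 v, v \in V1 & nonsingular col C2 v) ->
  (exists2 w, w \in V2 & nonsingular col C1 w) ->
  forall (v : T) (l : nat), ~~ odd l ->
    (4 <= l <= 4 * minn n m) || (2 * maxn n m <= l <= 2 * n + 2 * m) ->
    exists2 s : seq T, alt_cycle adj col s & (size s = l) /\ (v \in s).
Proof.
move=> [adjsym _ colsym] Hdis HU Hext HC1 HV1 Hn HC2 HV2 Hm NG NS1 NS2 v l el hl.
have [x Px] := param_of HC1 colsym; rewrite Hn in Px.
have [y Py] := param_of HC2 colsym; rewrite Hm in Py.
have n2 : 2 <= n by have := alt_size HC1; rewrite Hn -muln2; lia.
have m2 : 2 <= m by have := alt_size HC2; rewrite Hm -muln2; lia.
have eN : ~~ odd n.*2 by rewrite odd_double.
have eM : ~~ odd m.*2 by rewrite odd_double.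
have N0 : 0 < n.*2 by lia.
have M0 : 0 < m.*2 by lia.
have inV1 : forall t, x t \in V1 by move=> t; rewrite -HV1 inE (zC Px).
have inV2 : forall t, y t \in V2 by move=> t; rewrite -HV2 inE (zC Py).
have hxy : forall s t, adj (x s) (y t) by move=> s t; apply: Hext.
have hne : forall s t, x s <> y t.
  by move=> s t e; have := disjointFr Hdis (inV1 s); rewrite e inV2.
have htot : forall v, (exists t, v = x t) \/ (exists t, v = y t).
  move=> w; have : w \in V1 :|: V2 by rewrite HU inE.
  rewrite inE => /orP [h|h]; [left|right].
  - by move: h; rewrite -HV1 inE => /(zsurj Px) [t <-]; exists t.
  - by move: h; rewrite -HV2 inE => /(zsurj Py) [t <-]; exists t.
have hcard : #|T| = n.*2 + m.*2.
  rewrite -cardsT -HU cardsU (disjoint_setI0 Hdis) cards0 subn0 -HV1 -HV2 !cardsE.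
  have u1 : uniq C1 by case: (C1) HC1 => // ? ? /and4P[].
  have u2 : uniq C2 by case: (C2) HC2 => // ? ? /and4P[].
  by rewrite (card_uniqP u1) (card_uniqP u2) Hn Hm.
have NGxy : forall i j, ~~ good_pair col C1 C2 (x i) (y j).
  by move=> i j; apply: NG.
have Py' := param_refl adjsym colsym Py eM (ltac:(lia)).
set y' := fun t => y (1 + (m.*2).-1 * t) in Py'.
have inV2' : forall t, y' t \in V2 by move=> t; rewrite -HV2 inE (zC Py').
have NGxy' : forall i j, ~~ good_pair col C1 C2 (x i) (y' j).
  by move=> i j; apply: NG.
have hD := flipD colsym Px Py eN eM N0 M0 NGxy.
have hD' := flipD colsym Px Py' eN eM N0 M0 NGxy'.
have NS1' : exists2 v, v \in C1 & nonsingular col C2 v.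
  by case: NS1 => w; rewrite -HV1 inE => h1 h2; exists w.
have NS2' : exists2 v, v \in C2 & nonsingular col C1 v.
  by case: NS2 => w; rewrite -HV2 inE => h1 h2; exists w.
case: (nc_or colsym Px Py (ltac:(lia)) NS1' NS2') => hnc.
- move: (finish adjsym colsym (zP Px) (zP Py) (zinj Px) (zinj Py) (zadj Px) (zadj Py)
    (zcol Px) (zcol Py) hxy hne hD hnc n2 m2 htot hcard v el hl) => H. exact H.
- have hxy' : forall s t, adj (x s) (y' t) by move=> s t; apply: Hext.
  have hne' : forall s t, x s <> y' t.
    by move=> s t e; have := disjointFr Hdis (inV1 s); rewrite e inV2'.
  have htot' : forall v, (exists t, v = x t) \/ (exists t, v = y' t).
    move=> w; case: (htot w) => [h|[t ->]]; first by left.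
    by right; have [t' <-] := zsurj Py' (zC Py t); exists t'.
  exact: (finish adjsym colsym (zP Px) (zP Py') (zinj Px) (zinj Py') (zadj Px) (zadj Py')
    (zcol Px) (zcol Py') hxy' hne' hD' hnc n2 m2 htot' hcard v el hl).
Qed.
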